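(* Let $k\geq2$ and let $L=(l_1,\dots,l_k)$ be generic positive integers with sum $n$. Let $X=(u,v)$ be an oriented 1-simplex of $Tonn^{n,k}(L)$ with $L$-type $I\subseteq[k]$. Then $X$ is homotopic relative to its end-points to an edge-path $Y_1Y_2\cdots Y_t$ consisting of $\oplus$-atomic oriented 1-simplices, where $t=|I|$ and the types of $Y_1,\dots,Y_t$ are pairwise distinct and together form exactly the set $I$.
   Context: The generalized tonnetz $Tonn^{n,k}(L)$ is the simplicial complex on vertex set $\mathbb{Z}_n$ whose maximal simplices are $\Delta(x;\sigma)=\{x,\,x+l_{\sigma(1)},\dots,x+l_{\sigma(1)}+\dots+l_{\sigma(k-1)}\}$ for $x\in\mathbb{Z}_n$, $\sigma\in S_k$. $L$ is generic if for all $I,J\subseteq[k]$, $\sum_{i\in I}l_i=\sum_{j\in J}l_j$ implies $I=J$. For an oriented 1-simplex $X=(u,v)$, its $L$-type is the unique nonempty $I\subseteq[k]$ with $v-u\equiv\sum_{j\in I}l_j\pmod n$, where $v-u$ is taken in $\{1,\dots,n-1\}$ (it exists since $\{u,v\}$ lies in some $\Delta(x;\sigma)$, and is unique by genericity). $X$ is $\oplus$-atomic of type $i$ if $v=u+l_i$ in $\mathbb{Z}_n$. Edge-paths are sequences of oriented 1-simplices with matching end-points; two edge-paths with the same end-points are homotopic (rel end-points) if one is obtained from the other by finitely many elementary moves: replacing an edge $(a,c)$ by $(a,b)(b,c)$ where $\{a,b,c\}$ is a simplex, or the reverse (including insertion/deletion of backtracks $(a,b)(b,a)$). *)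

(* Defs.v *)
From HB Require Import structures.
From mathcomp Require Import all_boot all_order all_fingroup.
From Stdlib Require Import Relation_Operators.
Set Implicit Arguments. Unset Strict Implicit. Unset Printing Implicit Defensive.

(* L = (l_1,...,l_k) is a function 'I_k -> nat; vertices of Z_n are the
   naturals 0..n-1, with arithmetic taken %% n. *)

Definition tn (k : nat) (L : 'I_k -> nat) : nat := \sum_(i < k) L i.

Definition generic (k : nat) (L : 'I_k -> nat) : Prop :=
  forall I J : {set 'I_k}, \sum_(i in I) L i = \sum_(j in J) L j -> I = J.

(* v is a vertex of Delta(x; s) =
   {x, x + l_s(1), ..., x + l_s(1) + ... + l_s(k-1)} *)
Definition in_maxsimp (k : nat) (L : 'I_k -> nat) (x : nat) (s : {perm 'I_k})
  (v : nat) : bool :=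
  [exists j : 'I_k, v == (x + \sum_(i < k | i < j) L (s i)) %% tn L].

Definition is_simplex (k : nat) (L : 'I_k -> nat) (S : seq nat) : bool :=
  [exists x : 'I_(tn L), [exists s : {perm 'I_k}, all (in_maxsimp L x s) S]].

Definition is_edge (k : nat) (L : 'I_k -> nat) (u v : nat) : bool :=
  [&& u < tn L, v < tn L, u != v & is_simplex L [:: u; v]].

Definition Ltype (k : nat) (L : 'I_k -> nat) (u v : nat) (I : {set 'I_k}) : Prop :=
  I != set0 /\ (v + tn L - u) %% tn L = (\sum_(j in I) L j) %% tn L.

Definition atomic (k : nat) (L : 'I_k -> nat) (u v : nat) (i : 'I_k) : Prop :=
  v = (u + L i) %% tn L.

(* vertices after u of the edge-path of (+)-atomic steps of types Y *)
Fixpoint awalk (k : nat) (L : 'I_k -> nat) (u : nat) (Y : seq 'I_k) : seq nat :=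
  match Y with
  | [::] => [::]
  | i :: Y' => let w := (u + L i) %% tn L in w :: awalk L w Y'
  end.

(* Edge-paths are represented by their vertex sequences w_0 w_1 ... w_t,
   the edges being (w_j, w_{j+1}).  Elementary moves: *)
Inductive elem_move (k : nat) (L : 'I_k -> nat) : seq nat -> seq nat -> Prop :=
| em_tri (p q : seq nat) (a b c : nat) :
    is_edge L a c -> is_edge L a b -> is_edge L b c ->
    is_simplex L [:: a; b; c] ->
    elem_move L (p ++ [:: a, c & q]) (p ++ [:: a, b, c & q])
| em_back (p q : seq nat) (a b : nat) :
    is_edge L a b -> is_edge L b a ->
    elem_move L (p ++ a :: q) (p ++ [:: a, b, a & q]).

Definition homotopic (k : nat) (L : 'I_k -> nat) : seq nat -> seq nat -> Prop :=
  clos_refl_sym_trans (seq nat) (@elem_move k L).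

(* Main.v *)
Require Import Defs.
From HB Require Import structures.
From mathcomp Require Import all_boot all_order all_fingroup.
From Stdlib Require Import Relation_Operators.
Set Implicit Arguments. Unset Strict Implicit. Unset Printing Implicit Defensive.

Lemma maxsimp_lt k (L : 'I_k -> nat) (x : 'I_(tn L)) s a :
  in_maxsimp L x s a -> a < tn L.
Proof.
move=> /existsP [j /eqP ->]; rewrite ltn_mod.
by apply: leq_ltn_trans (ltn_ord x).
Qed.

Lemma maxsimp_edge k (L : 'I_k -> nat) (x : 'I_(tn L)) s a b :
  in_maxsimp L x s a -> in_maxsimp L x s b -> a != b -> is_edge L a b.
Proof.
move=> Ha Hb Hab; rewrite /is_edge (maxsimp_lt Ha) (maxsimp_lt Hb) Hab /=.
by apply/existsP; exists x; apply/existsP; exists s; rewrite /= Ha Hb.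
Qed.

Lemma maxsimp_path k (L : 'I_k -> nat) (x : 'I_(tn L)) s ws : forall a,
  uniq (a :: ws) -> all (in_maxsimp L x s) (a :: ws) -> path (is_edge L) a ws.
Proof.
elim: ws => [//|b ws IH] a /= /andP [Hna /andP [Hnb Hu]] /and3P [Ha Hb Hall].
rewrite (IH b) ?andbT /=; last by rewrite Hb.
  apply: (maxsimp_edge Ha Hb); apply: contra Hna => /eqP ->; exact: mem_head.
by rewrite Hnb.
Qed.

Lemma chain_hom k (L : 'I_k -> nat) (x : 'I_(tn L)) s v ws : forall q a,
  uniq (a :: rcons ws v) -> all (in_maxsimp L x s) (a :: rcons ws v) ->
  homotopic L (q ++ [:: a; v]) (q ++ a :: rcons ws v).
Proof.
elim: ws => [|b ws IH] q a Hu Ha; first exact: rst_refl.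
move: Hu Ha; rewrite rcons_cons => Hu Ha.
have Hav : a != v.
  move: Hu => /= /andP [H _]; apply: contra H => /eqP <-.
  by rewrite in_cons mem_rcons mem_head orbT.
have Hab : a != b.
  move: Hu => /= /andP [H _]; apply: contra H => /eqP <-; exact: mem_head.
have Hbv : b != v.
  move: Hu => /= /andP [_ /andP [H _]]; apply: contra H => /eqP <-.
  by rewrite mem_rcons mem_head.
have Hma : in_maxsimp L x s a by move: Ha => /andP [].
have Hmb : in_maxsimp L x s b by move: Ha => /and3P [].
have Hmv : in_maxsimp L x s v.
  move/allP: Ha; apply; rewrite inE; apply/orP; right; rewrite -rcons_cons mem_rcons; exact: mem_head.
rewrite /homotopic; apply: (rst_trans _ _ _ (q ++ [:: a, b & [:: v]])).
  
  apply: rst_step; have := @em_tri k L q [::] a b v; rewrite /=; apply.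
  - exact: maxsimp_edge Hma Hmv Hav.
  - exact: maxsimp_edge Hma Hmb Hab.
  - exact: maxsimp_edge Hmb Hmv Hbv.
  by apply/existsP; exists x; apply/existsP; exists s; rewrite /= Hma Hmb Hmv.
have := IH (q ++ [:: a]) b.
rewrite -!catA /=; apply.
  by move: Hu => /= /andP [].
by move: Ha => /= /andP [].
Qed.
Definition gg k (s : {perm 'I_k.+1}) (i : nat) : 'I_k.+1 := s (inord (i %% k.+1)).
Definition fp k (L : 'I_k.+1 -> nat) s i := L (gg s i).
Definition Sp k (L : 'I_k.+1 -> nat) s j := \sum_(i < j) fp L s i.

Lemma Sp_P k (L : 'I_k.+1 -> nat) s j : j <= k.+1 ->
  Sp L s j = \sum_(i < k.+1 | i < j) L (s i).
Proof.
move=> Hj; rewrite /Sp (big_ord_widen _ _ Hj); apply: eq_bigr => i _.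
by rewrite /fp /gg modn_small // inord_val.
Qed.

Lemma Sp_K k (L : 'I_k.+1 -> nat) s : Sp L s k.+1 = tn L.
Proof.
rewrite Sp_P // /tn [in RHS](reindex_inj (@perm_inj _ s)) /=.
by apply: eq_bigl => i; rewrite ltn_ord.

Qed.

Lemma Sp_S k (L : 'I_k.+1 -> nat) s j : Sp L s j.+1 = Sp L s j + fp L s j.
Proof. by rewrite /Sp big_ord_recr. Qed.

Lemma Sp_per k (L : 'I_k.+1 -> nat) s j : Sp L s (k.+1 + j) = tn L + Sp L s j.
Proof.
rewrite /Sp big_split_ord /= -(Sp_K L s) /Sp; congr (_ + _).
by apply: eq_bigr => i _; rewrite /fp /gg modnDl.
Qed.

Lemma Sp_perq k (L : 'I_k.+1 -> nat) s q r : Sp L s (q * k.+1 + r) = q * tn L + Sp L s r.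
Proof.
elim: q => [//|q IH]; by rewrite mulSn -addnA Sp_per IH addnA mulSn.
Qed.

Lemma Sp_lt k (L : 'I_k.+1 -> nat) s : (forall i, 0 < L i) ->
  forall i j, i < j -> Sp L s i < Sp L s j.
Proof.
move=> Lp i j /subnKC <-; elim: (j - i.+1) => [|d IH].
  by rewrite addn0 Sp_S -[X in X < _]addn0 ltn_add2l; exact: Lp.
rewrite addnS Sp_S; apply: (leq_trans IH); exact: leq_addr.
Qed.

Lemma Sp_le k (L : 'I_k.+1 -> nat) s : (forall i, 0 < L i) ->
  forall i j, i <= j -> Sp L s i <= Sp L s j.
Proof.
move=> Lp i j; rewrite leq_eqVlt => /orP [/eqP -> //|H].
exact/ltnW/Sp_lt.
Qed.

Definition hv k (L : 'I_k.+1 -> nat) (x : nat) s j := (x + Sp L s j) %% tn L.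

Lemma hv_mod k (L : 'I_k.+1 -> nat) x s j :
  hv L x s j = (x + Sp L s (j %% k.+1)) %% tn L.
Proof.
rewrite /hv {1}(divn_eq j k.+1) Sp_perq addnCA modnMDl //.
Qed.

Lemma hv_in k (L : 'I_k.+1 -> nat) (x : 'I_(tn L)) s j : in_maxsimp L x s (hv L x s j).
Proof.
apply/existsP; exists (Ordinal (ltn_pmod j (ltn0Sn k))).
by rewrite hv_mod Sp_P //= ltnW // ltn_pmod.
Qed.

Lemma awalk_hv k (L : 'I_k.+1 -> nat) x s m : forall j,
  awalk L (hv L x s j) (map (gg s) (iota j m)) = map (hv L x s) (iota j.+1 m).
Proof.
elim: m => [//|m IH] j /=.
have E : (hv L x s j + L (gg s j)) %% tn L = hv L x s j.+1.
  by rewrite /hv modnDml Sp_S addnA.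
by rewrite E IH.
Qed.

From mathcomp Require Import zify.

Lemma window_eq K a i j : 0 < K -> a <= i < a + K -> a <= j < a + K ->
  i %% K = j %% K -> i = j.
Proof.
move=> K0 Hi Hj E.
wlog le : i j Hi Hj E / i <= j.
  move=> W; have [l|l] := leqP i j; first exact: W.
  by symmetry; apply: W => //; apply: ltnW.
have D : K %| j - i by rewrite -eqn_mod_dvd // E.
case: (posnP (j - i)) => [H|H]; first lia.
have := dvdn_leq H D; lia.
Qed.

Lemma hv_inj k (L : 'I_k.+1 -> nat) x s : (forall i, 0 < L i) ->
  forall i j, hv L x s i = hv L x s j -> i %% k.+1 = j %% k.+1.
Proof.
move=> Lp i j; rewrite !(hv_mod L x s) => /eqP; rewrite eqn_modDl.
have lt r : r < k.+1 -> Sp L s r < tn L.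
  move=> Hr; rewrite -(Sp_K L s); exact: Sp_lt.
rewrite (modn_small (lt _ (ltn_pmod i (ltn0Sn k)))) (modn_small (lt _ (ltn_pmod j (ltn0Sn k)))).

move=> /eqP E.
have [l|l|//] := ltngtP (i %% k.+1) (j %% k.+1).
  by have := Sp_lt s Lp l; rewrite E ltnn.
by have := Sp_lt s Lp l; rewrite E ltnn.
Qed.

Lemma gg_inj k (s : {perm 'I_k.+1}) i j : gg s i = gg s j -> i %% k.+1 = j %% k.+1.
Proof.
rewrite /gg => E; have := congr1 val (perm_inj E); rewrite /= !inordK //; apply: ltn_pmod; done.
Qed.

Lemma Sp_sum k (L : 'I_k.+1 -> nat) s a m :
  Sp L s (a + m) = Sp L s a + \sum_(i <- map (gg s) (iota a m)) L i.
Proof.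
rewrite big_map; elim: m => [|m IH]; first by rewrite addn0 big_nil addn0.
by rewrite addnS Sp_S IH -addn1 iotaD big_cat big_seq1 addnA.
Qed.

Lemma mod_diff n u D : u < n -> D < n -> ((u + D) %% n + n - u) %% n = D.
Proof.
move=> Hu HD.
have [l|l] := ltnP (u + D) n.
  rewrite (modn_small l) (_ : u + D + n - u = D + n); last lia.
  by rewrite modnDr modn_small.
have E : u + D = (u + D - n) + n by lia.
have E1 : u + D - n < n by lia.
have E2 : u + D - n + n - u = D by lia.
by rewrite E modnDr (modn_small E1) E2 modn_small.
Qed.

Lemma hab_nat K a b : a < K -> b < K -> a != b ->
  a < (if a < b then b else b + K) < a + K.
Proof. move=> Ha Hb Hab; case: ifP => H; lia. Qed.

Lemma last_iota a m : last a (iota a.+1 m) = a + m.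
Proof. by elim: m a => [|m IH] a /=; [rewrite addn0 | rewrite IH addnS]. Qed.

Theorem lemma2p7 (k : nat) (L : 'I_k -> nat) (u v : nat) (I : {set 'I_k}) :
  2 <= k -> (forall i, 0 < L i) -> generic L ->
  is_edge L u v -> Ltype L u v I ->
  exists Y : seq 'I_k,
    [/\ size Y = #|I|, uniq Y & [set i in Y] = I] /\
    [/\ path (is_edge L) u (awalk L u Y),
        last u (awalk L u Y) = v
      & homotopic L [:: u; v] (u :: awalk L u Y)].
Proof.
case: k L I => [|k] L I Hk; first by [].
move=> Lp Gen /and4P [Hu Hv Huv Hs] [In0 Hsum].
case/existsP: Hs => x /existsP [s /=]; rewrite andbT.
move=> /andP [/existsP [ja /eqP Eu] /existsP [jb /eqP Ev]].
have Eu' : u = hv L x s ja by rewrite Eu /hv Sp_P // ltnW.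
have Ev0 : v = hv L x s jb by rewrite Ev /hv Sp_P // ltnW.
have Hja := ltn_ord ja; have Hjb := ltn_ord jb.
set a := nat_of_ord ja in Eu' Hja.
pose b' := if ja < jb then nat_of_ord jb else jb + k.+1.
have Hab : a < b' < a + k.+1.
  apply: hab_nat => //.
  by apply: contra Huv => /eqP E; rewrite Eu' Ev0 -E.
have Ev' : v = hv L x s b'.
  rewrite /b'; case: ifP => _ //.
  by rewrite Ev0 [in RHS]hv_mod modnDr (modn_small Hjb).
clearbody b' a.
pose m := b' - a.
have Ebm : a + m = b' by rewrite /m subnKC // ltnW //; case/andP: Hab.
have m0 : 0 < m by rewrite /m subn_gt0; case/andP: Hab.
clearbody m.
pose Y := map (gg s) (iota a m).
have win i : i \in iota a m.+1 -> a <= i < a + k.+1.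
  move: Hab Ebm; clear; move=> Hab Ebm; rewrite mem_iota; lia.
have uY : uniq Y.
  rewrite map_inj_in_uniq ?iota_uniq // => i j Hi Hj /gg_inj E.
  apply: (window_eq (ltn0Sn k) _ _ E); apply: win;
  by move: Hi Hj; clear; rewrite !mem_iota; lia.
have W : awalk L u Y = map (hv L x s) (iota a.+1 m) by rewrite Eu' awalk_hv.
have uW : uniq (u :: awalk L u Y).
  rewrite W Eu' -[_ :: _]/(map (hv L x s) (iota a m.+1)).
  rewrite map_inj_in_uniq ?iota_uniq // => i j Hi Hj /(hv_inj Lp) E.
  exact: (window_eq (ltn0Sn k) (win _ Hi) (win _ Hj) E).
have aW : all (in_maxsimp L x s) (u :: awalk L u Y).
  rewrite W Eu' -[_ :: _]/(map (hv L x s) (iota a m.+1)).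
  by apply/allP => w /mapP [i _ ->]; apply: hv_in.
have lW : last u (awalk L u Y) = v.
  by rewrite W Eu' last_map last_iota Ebm.
pose D := \sum_(i <- Y) L i.
have ED : Sp L s b' = Sp L s a + D by rewrite -Ebm Sp_sum.
have D0 : 0 < D.
  by have := Sp_lt s Lp (proj1 (andP Hab)); rewrite ED -{1}[Sp L s a]addn0 ltn_add2l.
have Dn : D < tn L.
  have : b' < a + k.+1 by case/andP: Hab.
  by move=> /(Sp_lt s Lp); rewrite addnC Sp_per ED addnC ltn_add2r.
have EvD : v = (u + D) %% tn L by rewrite Ev' Eu' /hv ED addnA modnDml.
have HD : (v + tn L - u) %% tn L = D by rewrite EvD mod_diff.
have sI : \sum_(i in I) L i <= tn L.
  rewrite /tn [X in _ <= X](bigID (fun i => i \in I)) /=; exact: leq_addr.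
have sIn : \sum_(i in I) L i = D.
  move: Hsum; rewrite HD.
  move: sI; rewrite leq_eqVlt => /orP [/eqP ->|lt].
    rewrite modnn => D00; move: D0; rewrite D00 //.
  by rewrite (modn_small lt).
have EI : [set i in Y] = I.
  apply: Gen; rewrite sIn /D (big_uniq _ uY).
  by apply: eq_bigl => i; rewrite inE.
exists Y; split.
  split => //; first by rewrite -EI cardsE (card_uniqP uY) /Y size_map size_iota.
split => //.
  exact: maxsimp_path uW aW.
rewrite -{1}lW.
have : awalk L u Y != [::] by rewrite W; case: (m) m0.
move: uW aW; case/lastP: (awalk L u Y) => [//|ws v'] uW aW _.
rewrite last_rcons; exact: (chain_hom [::] uW aW).
Qed.
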